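(* Let $(M,h)$ be a Riemannian manifold, $p\in C^\infty(M)$, $\omega^\sharp$ the $h$-gradient of $p$, $\bar g>0$, and $\mathbf{G}^T=-\bar g\,\omega^\sharp$. Fix $x\in M$ and $\tilde\eta\in(0,1]$, put $b=\|\omega^\sharp\|_h(x)$, and assume $\tilde\eta\|\mathbf{G}^T\|_h(x)<1$ (i.e. $\tilde\eta\bar g b<1$). Let $\phi(s)=\frac{1}{1+\tilde\eta\bar g s}$ for $|s|\le b$. Then the following are equivalent: (i) $\phi(s)-s\phi'(s)+(b^2-s^2)\phi''(s)>0$ for all $s$ with $|s|\le b$; (ii) $|s|\le b<b_0$ for all such $s$, where $b_0=\frac{1}{2\tilde\eta\bar g}$; (iii) $\|\mathbf{G}^T\|_h(x)<\frac{1}{2\tilde\eta}$.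
   Context: Here $s$ plays the role of $\beta/\alpha$ with $\alpha=\sqrt{h(y,y)}$, $\beta=h(y,\omega^\sharp)$, $y\in T_xM\setminus\{0\}$, so that $|s|\le b$ by Cauchy–Schwarz; note $\|\mathbf{G}^T\|_h=\bar g\,b$. *)

(* Defs.v *)
From HB Require Import structures.
From mathcomp Require Import all_boot all_order all_algebra.
From mathcomp Require Import all_classical all_reals all_analysis.
Set Implicit Arguments. Unset Strict Implicit. Unset Printing Implicit Defensive.
Import Order.TTheory GRing.Theory Num.Theory numFieldNormedType.Exports.
Local Open Scope ring_scope.

Definition phi (R : realType) (eta gbar : R) (s : R) : R :=
  (1 + eta * gbar * s)^-1.

(* Main.v *)
Require Import Defs.
From HB Require Import structures.
From mathcomp Require Import all_boot all_order all_algebra.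
From mathcomp Require Import all_classical all_reals all_analysis.
From mathcomp Require Import ring lra.
Import Order.TTheory GRing.Theory Num.Theory numFieldNormedType.Exports.
Local Open Scope ring_scope.

Lemma derivableV' (R: realType) (f : R -> R) (x v : R) : f x != 0 -> derivable f x v -> derivable (fun y => (f y)^-1) x v.
Proof. exact: derivableV. Qed.
Lemma deriveV' (R: realType) (f : R -> R) (x v : R) : f x != 0 -> derivable f x v -> 'D_v (fun y => (f y)^-1) x = - (f x) ^- 2 *: 'D_v f x.
Proof. exact: deriveV. Qed.

Section S.
Variable R : realType.
Variables eta gbar : R.
Let c := eta * gbar.

Lemma u_der (x : R) : is_derive x 1 (fun s : R => 1 + c * s) c.
Proof.
have -> : (fun s : R => 1 + c * s) = cst 1 + c \*: id by apply/funext => s.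
have H := is_deriveD (@is_derive_cst R R R 1 x 1) (is_deriveZ c (@is_derive_id R R x 1)).
by move: H; rewrite add0r /GRing.scale /= mulr1.
Qed.

Lemma phi_der (x : R) : 1 + c * x != 0 ->
  is_derive x 1 (phi eta gbar) (- c * (phi eta gbar x) ^+ 2).
Proof.
Timeout 10 move=> h.
Timeout 10 have du := u_der x.
Timeout 10 have dv := @ex_derive _ _ _ _ _ _ _ du.
Timeout 10 have E : phi eta gbar = (fun s => (1 + c * s)^-1) by apply/funext => s; rewrite /phi /c.
Timeout 10 rewrite E.
Timeout 10 have dV := @derivableV' R (fun s => 1 + c * s) x 1 h dv.
Timeout 10 have dD := @deriveV' R (fun s => 1 + c * s) x 1 h dv.
Timeout 10 apply: DeriveDef.
Timeout 10 exact dV.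
Timeout 10 rewrite dD derive_val.
rewrite -[LHS]/(- (1 + c * x) ^- 2 * c) exprVn; ring.
Qed.

Lemma phi_d1 (x : R) : 1 + c * x != 0 ->
  derive1 (phi eta gbar) x = - c * (phi eta gbar x) ^+ 2.
Proof. move=> h; rewrite derive1E; have dp := phi_der x h; exact: (@derive_val _ _ _ _ _ _ _ dp). Qed.

Lemma phi_d2 (x : R) : 1 + c * x != 0 ->
  derive1n 2 (phi eta gbar) x = 2 * c ^+ 2 * (phi eta gbar x) ^+ 3.
Proof.
move=> h.
Timeout 20 have -> : derive1n 2 (phi eta gbar) = derive1 (derive1 (phi eta gbar)) by [].
have near1 : \forall t \near x, 1 + c * t != 0.
  Timeout 20 have := u_der x; case => /derivable1_diffP /differentiable_continuous cu _.
have NH : \forall y \near (1 + c * x), y != 0.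
    exists `|1 + c * x|; first by rewrite /= normr_gt0.
    move=> y /= yl; apply/eqP=> y0; move: yl; rewrite y0 subr0 ltxx.
    done.
  exact: (cu _ NH).
Timeout 20 rewrite derive1E (@near_eq_derive _ _ _ _ (fun t => (- c) * (phi eta gbar t) ^+ 2)).
  have dp := phi_der x h.
  have H := is_deriveZ (- c) (is_deriveX 2 dp).
  Timeout 20 have -> : (fun t : R => - c * phi eta gbar t ^+ 2) = (- c) \*: (phi eta gbar ^+ 2) by apply/funext.
  Timeout 20 rewrite (@derive_val _ _ _ _ _ _ _ H).
  Timeout 20 rewrite -[LHS]/(- c * ((2%:R * phi eta gbar x ^+ 1) * (- c * phi eta gbar x ^+ 2))).
  ring.
near=> t; apply: phi_d1; near: t; exact: near1.
Unshelve. all: by end_near.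
Qed.
End S.
Lemma ltVP (R : realType) (x y : R) : 0 < x -> (y < x^-1) = (x * y < 1).
Proof. by move=> hx; rewrite -(ltr_pM2l hx) mulfV // gt_eqF. Qed.

Theorem lemma3p1 (R : realType) (V : normedModType R) (w : V)
  (eta gbar : R) (heta0 : 0 < eta) (heta1 : eta <= 1) (hg : 0 < gbar)
  (hsmall : eta * `|(- gbar) *: w| < 1) :
  let b := `|w| in
  ((forall s : R, `|s| <= b ->
      0 < phi eta gbar s - s * derive1 (phi eta gbar) s
            + (b ^+ 2 - s ^+ 2) * derive1n 2 (phi eta gbar) s)
   <-> (forall s : R, `|s| <= b -> `|s| <= b /\ b < (2 * eta * gbar)^-1))
  /\
  ((forall s : R, `|s| <= b -> `|s| <= b /\ b < (2 * eta * gbar)^-1)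
   <-> `|(- gbar) *: w| < (2 * eta)^-1).
Proof.
move=> b.
have nG : `|(- gbar) *: w| = gbar * b by rewrite normrZ normrN gtr0_norm.
have b0 : 0 <= b by rewrite /b normr_ge0.
have z0 : `|(0:R)| <= b by rewrite normr0.
set c := eta * gbar.
have c0 : 0 < c by rewrite mulr_gt0.
have cb1 : c * b < 1 by rewrite /c -mulrA -nG.
have key : forall s, `|s| <= b ->
   (0 < phi eta gbar s - s * derive1 (phi eta gbar) s
            + (b ^+ 2 - s ^+ 2) * derive1n 2 (phi eta gbar) s)
   = (0 < 1 + 3 * c * s + 2 * c ^+ 2 * b ^+ 2).
  move=> s; rewrite ler_norml => /andP [hs1 hs2].
  have u0 : 0 < 1 + c * s.
    have : - (c * b) <= c * s by rewrite -mulrN ler_wpM2l // ltW.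
    lra.
  have un0 : 1 + c * s != 0 by rewrite gt_eqF.
  rewrite (@phi_d1 R eta gbar s un0) (@phi_d2 R eta gbar s un0).
  have -> : phi eta gbar s - s * (- c * phi eta gbar s ^+ 2)
     + (b ^+ 2 - s ^+ 2) * (2 * c ^+ 2 * phi eta gbar s ^+ 3)
     = (1 + c * s)^-1 ^+ 3 * (1 + 3 * c * s + 2 * c ^+ 2 * b ^+ 2).
    rewrite /phi -/c; field; done.
  by rewrite pmulr_rgt0 // exprn_gt0 // invr_gt0.
have iff2 : b < (2 * eta * gbar)^-1 <-> 2 * c * b < 1.
  by rewrite ltVP ?mulrA //; rewrite -mulrA mulr_gt0.
split.
  split.
    move=> H s hs; split => //; apply/iff2.
    have hb : `|- b| <= b by rewrite normrN ger0_norm.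
    have := H _ hb; rewrite key // => hQ.
    have : 0 < (1 - c * b) * (1 - 2 * c * b) by lra.
    rewrite pmulr_rgt0; last lra.
    lra.
  move=> H s hs; rewrite key //.
  have [_ /iff2 h2] := H 0 z0.
  move: hs; rewrite ler_norml => /andP [hs1 hs2].
  have h1 : c * (- b) <= c * s by rewrite ler_wpM2l // ltW.
  have h3 : 0 < (1 - c * b) * (1 - 2 * c * b) by rewrite mulr_gt0 // subr_gt0.
  have -> : 1 + 3*c*s + 2*c^+2*b^+2 = (1 - c*b)*(1 - 2*c*b) + 3 * (c*s - c*(-b)) by rewrite /c; ring.
  lra.
split.
  move=> H; have [_ h2] := H 0 z0.
  rewrite nG ltVP ?mulr_gt0 //; move/iff2: h2.
  by rewrite /c; lra.
move=> h s hs; split => //; apply/iff2.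
move: h; rewrite nG ltVP ?mulr_gt0 //.
by rewrite /c; lra.
Qed.
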